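(* Let $K$ be a convex body in $\mathbb{R}^d$, let $x$ be a regular boundary point of $K$ with exterior normal unit vector $\xi$, and let $U$ be an open neighborhood of the set $-S(K,-\xi)+x$. Then there is an open neighborhood $V$ of $x$ such that for every $t\in\mathbb{R}^d\setminus\Delta(K)$, if $K+t$ intersects $V$ then $t\in U$.
   Context: A convex body is a compact convex set with nonempty interior. A boundary point is regular if $K$ has a unique support hyperplane there; its exterior normal unit vector $\xi$ satisfies $K\subset\{z:\langle z,\xi\rangle\le\langle x,\xi\rangle\}$. For a unit vector $\eta$, $S(K,\eta)=K\cap H(K,\eta)$, where $H(K,\eta)$ is the support hyperplane of $K$ with exterior normal $\eta$ (i.e. $S(K,\eta)$ is the set of maximizers of $\langle\cdot,\eta\rangle$ on $K$). $\Delta(K)=\{y: m(K\cap(K+y))>0\}$, $m$ Lebesgue measure. *)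

(* Defs.v *)
From HB Require Import structures.
From mathcomp Require Import all_boot all_order all_algebra.
From mathcomp Require Import all_classical all_reals all_analysis.
Set Implicit Arguments. Unset Strict Implicit. Unset Printing Implicit Defensive.
Import Order.TTheory GRing.Theory Num.Theory.
Import numFieldNormedType.Exports.
Local Open Scope classical_set_scope.
Local Open Scope ring_scope.

(* Points of R^d are row vectors 'rV[R]_d; coordinates are [z ord0 i]. *)

Definition dotv {R : realType} {d : nat} (z w : 'rV[R]_d) : R :=
  \sum_(i < d) z ord0 i * w ord0 i.

Definition unit_vec {R : realType} {d : nat} (u : 'rV[R]_d) : Prop :=
  dotv u u = 1.

Definition convex_set {R : realType} {d : nat} (K : set 'rV[R]_d) : Prop :=
  forall x y, K x -> K y -> forall l : R, 0 <= l -> l <= 1 ->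
    K (l *: x + (1 - l) *: y).

Definition convex_body {R : realType} {d : nat} (K : set 'rV[R]_d) : Prop :=
  [/\ compact K, convex_set K & (K°) !=set0].

Definition ext_normal {R : realType} {d : nat} (K : set 'rV[R]_d)
  (x xi : 'rV[R]_d) : Prop :=
  forall z, K z -> dotv z xi <= dotv x xi.

(** regular boundary point: boundary point with a unique support hyperplane,
    i.e. a unique exterior unit normal *)
Definition regular_point {R : realType} {d : nat} (K : set 'rV[R]_d)
  (x : 'rV[R]_d) : Prop :=
  [/\ K x, ~ (K°) x &
      exists! xi : 'rV[R]_d, unit_vec xi /\ ext_normal K x xi].

Definition support_set {R : realType} {d : nat} (K : set 'rV[R]_d)
  (eta : 'rV[R]_d) : set 'rV[R]_d :=
  [set y | K y /\ forall z, K z -> dotv z eta <= dotv y eta].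

Definition translate {R : realType} {d : nat} (K : set 'rV[R]_d)
  (y : 'rV[R]_d) : set 'rV[R]_d := [set z | K (z - y)].

(** Lebesgue (outer) measure on R^d, via countable covers by closed boxes *)
Definition box {R : realType} {d : nat} (a b : 'rV[R]_d) : set 'rV[R]_d :=
  [set z | forall i : 'I_d, a ord0 i <= z ord0 i <= b ord0 i].

Definition box_vol {R : realType} {d : nat} (a b : 'rV[R]_d) : R :=
  \prod_(i < d) Num.max 0 (b ord0 i - a ord0 i).

Definition lebesgue_outer {R : realType} {d : nat} (A : set 'rV[R]_d) : \bar R :=
  ereal_inf [set s : \bar R | exists (a b : nat -> 'rV[R]_d),
     A `<=` \bigcup_n box (a n) (b n) /\
     s = (\sum_(0 <= n <oo) ((box_vol (a n) (b n))%:E))%E].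

Definition Delta {R : realType} {d : nat} (K : set 'rV[R]_d) : set 'rV[R]_d :=
  [set y | (0 < lebesgue_outer (K `&` translate K y))%E].

(* Main.v *)
Require Import Defs.
From HB Require Import structures.
From mathcomp Require Import all_boot all_order all_algebra.
From mathcomp Require Import all_classical all_reals all_analysis.
Import Order.TTheory GRing.Theory Num.Theory.
Import numFieldNormedType.Exports.
Local Open Scope classical_set_scope.
Local Open Scope ring_scope.
From mathcomp Require Import measurable_realfun.
From mathcomp Require Import ring lra.
Local Open Scope ereal_scope.

Lemma memitv (R : realType) (a b y : R) : (y \in `[a, b]%classic) = (a <= y <= b)%R.
Proof. apply/idP/idP; rewrite in_setE /= in_itv //. Qed.

Definition volm {R : realType} (m : nat) (a b : nat -> R) : R :=
  (\prod_(0 <= i < m) Num.max 0 (b i - a i))%R.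

Lemma volm_ge0 {R : realType} m (a b : nat -> R) : (0 <= volm m a b)%R.
Proof. by apply: prodr_ge0 => i _; rewrite le_max lexx. Qed.

Lemma cover_sum {R : realType} (m : nat) : forall (l u : nat -> R)
  (a b : nat -> nat -> R) (P : nat -> bool),
  (forall i, (i < m)%N -> l i <= u i)%R ->
  (forall z : nat -> R, (forall i, (i < m)%N -> l i <= z i <= u i)%R ->
     exists n, P n /\ forall i, (i < m)%N -> (a n i <= z i <= b n i)%R) ->
  ((\prod_(0 <= i < m) (u i - l i))%:E <=
    \sum_(0 <= n <oo) (if P n then volm m (a n) (b n) else 0)%:E).
Proof.
elim: m => [|m IH] l u a b P lu cov.
  have [n [Pn _]] := cov (fun _ => 0%R) (fun i (h : (i < 0)%N) => ltac:(by [])).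
  rewrite big_geq //.
  apply: le_trans (nneseries_lim_ge n.+1 _); last first.
    by move=> k _ _; case: (P k); rewrite lee_fin ?volm_ge0.
  rewrite big_nat_recr //= Pn /volm.
  rewrite [X in _ <= _ + X%:E]big_geq // -[leLHS]add0e; apply: leeD => //.
  by apply: sume_ge0 => k _; case: (P k); rewrite lee_fin ?volm_ge0.
rewrite big_nat_recr //=.
set L := (\prod_(0 <= i < m) (u i - l i))%R.
have L0 : (0 <= L)%R.
  rewrite /L big_nat_cond; apply: prodr_ge0 => i; rewrite andbT => /andP[_ im].
  by rewrite subr_ge0; apply: lu; rewrite ltnS ltnW.
have lum : (l m <= u m)%R by apply: lu.
pose D := `[l m, u m]%classic.
have mD : measurable D by exact: measurable_itv.
pose c n := (if P n then volm m (a n) (b n) else 0)%R.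
have c0 n : (0 <= c n)%R by rewrite /c; case: (P n); rewrite ?volm_ge0.
pose I n := `[a n m, b n m]%classic.
pose f n y := (c n * \1_(I n) y)%:E.
have f0 n y : 0 <= f n y by rewrite lee_fin mulr_ge0.
have mf n : measurable_fun D (f n).
  apply/measurable_EFinP; apply: measurable_funM; first exact: measurable_cst.
  by apply: measurable_indic; exact: measurable_itv.
have step1 : (L * (u m - l m))%:E <= \int[lebesgue_measure]_(y in D) (cst L%:E) y.
  rewrite integral_cst // /D. have := lebesgue_measure_itv `[l m, u m]%R. move=> /= ->.
  case: ltP => [_|h]; first by rewrite -EFinB -EFinM.
  have -> : u m = l m by apply/eqP; rewrite eq_le -lee_fin h lum.
  by rewrite subrr mulr0 mule0.
apply: (le_trans step1).
have step2 : \int[lebesgue_measure]_(y in D) (cst L%:E) y <=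
    \int[lebesgue_measure]_(y in D) (\sum_(0 <= n <oo) f n y).
  apply: ge0_le_integral => //.
    by apply: ge0_emeasurable_sum => // k _; exact: mf.
  move=> y Dy.
  have Dy' : (l m <= y <= u m)%R by move: Dy; rewrite /D /= in_itv.
  have := IH l u a b (fun n => P n && (a n m <= y <= b n m)%R).
  have lu' : forall i, (i < m)%N -> (l i <= u i)%R.
    by move=> i im; apply: lu; rewrite ltnS ltnW.
  move=> /(_ lu') H; apply: (le_trans (H _)); last first.
    rewrite le_eqVlt; apply/orP; left; apply/eqP; apply: eq_eseriesr => n _.
    by rewrite /f /c indicE memitv; case: (P n); case: (_ <= _ <= _)%R; rewrite /= ?mulr1 ?mulr0.
    move=> z zr.
    have [|n [Pn Hn]] := cov (fun i => if i == m then y else z i).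
      move=> i; rewrite ltnS leq_eqVlt => /orP[/eqP ->|im]; first by rewrite eqxx.
      by rewrite (ltn_eqF im); apply: zr.
    exists n; split.
      by rewrite Pn /=; have := Hn m (ltnSn m); rewrite eqxx.
    by move=> i im; have := Hn i (ltnW im); rewrite (ltn_eqF im).

apply: (le_trans step2).
rewrite integral_nneseries //.
apply: lee_nneseries => [n _ _|n _].
  by apply: integral_ge0 => y _.
rewrite /f.
under eq_integral do rewrite EFinM.
rewrite ge0_integralZl_EFin //; last first.
  by apply/measurable_EFinP; apply: measurable_indic; exact: measurable_itv.
rewrite integral_indic //; last exact: measurable_itv.
have -> : (if P n then volm m.+1 (a n) (b n) else 0)%:E =
    (c n)%:E * (Num.max 0 (b n m - a n m))%:E.
  rewrite /c /volm big_nat_recr //=; case: (P n); first by rewrite EFinM.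
  by rewrite mul0e.
apply: lee_wpmul2l; first by rewrite lee_fin.
apply: (@le_trans _ _ (lebesgue_measure (I n))).
  apply: le_measure; rewrite ?inE.
  - by apply: measurableI => //; exact: measurable_itv.
  - exact: measurable_itv.
  - exact: subIsetl.
have := lebesgue_measure_itv `[a n m, b n m]%R; move=> /= ->.
case: ltP => h; first by rewrite -EFinB lee_fin le_max lexx orbT.
by rewrite lee_fin le_max lexx.
Qed.

Definition co {R : realType} {d : nat} (v : 'rV[R]_d) (i : nat) : R :=
  match @insub _ (fun k => (k < d)%N) 'I_d i with Some j => v ord0 j | None => 0%R end.

Lemma coE {R : realType} {d : nat} (v : 'rV[R]_d) (j : 'I_d) : co v j = v ord0 j.
Proof. by rewrite /co valK. Qed.

Lemma coord_le_norm {R : realType} {d : nat} (v : 'rV[R]_d) (j : 'I_d) :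
  (`|v ord0 j| <= `|v|)%R.
Proof.
rewrite [X in (_ <= X)%R]/Num.norm /= mx_normrE.
by apply: (le_trans _ (le_bigmax _ _ (ord0, j))).
Qed.

Lemma norm_le_coord {R : realType} {d : nat} (v : 'rV[R]_d) (h : R) :
  (0 <= h)%R -> (forall j : 'I_d, `|v ord0 j| <= h)%R -> (`|v| <= h)%R.
Proof.
move=> h0 H; rewrite [X in (X <= _)%R]/Num.norm /= mx_normrE.
apply: bigmax_le => //= -[i j] _ /=.
by rewrite (ord1 i); exact: H.
Qed.

Lemma outer_pos {R : realType} {d : nat} (A : set 'rV[R]_d) (c : 'rV[R]_d) (r : R) :
  (0 < r)%R -> (forall z, `|c - z| < r -> A z)%R -> 0 < lebesgue_outer A.
Proof.
move=> r0 Hb.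
pose h := (r / 2)%R.
have h0 : (0 < h)%R by rewrite divr_gt0.
have hr : (h < r)%R by rewrite /h ltr_pdivrMr // ltr_pMr // ltr1n.
apply: (@lt_le_trans _ _ ((\prod_(0 <= i < d) ((co c i + h) - (co c i - h)))%:E)).
  rewrite lte_fin; apply: prodr_gt0 => i _.
  lra.
apply: le_ereal_inf_tmp => s [a [b [cov ->]]].
have := @cover_sum R d (fun i => co c i - h)%R (fun i => co c i + h)%R
  (fun n => co (a n)) (fun n => co (b n)) (fun _ => true).
move=> H; apply: le_trans (H _ _) _.
- move=> i _; lra.
- move=> z zr.
  pose zr' := (\row_(j < d) z j : 'rV[R]_d).
  have Azr : A zr'.
    apply: Hb; apply: le_lt_trans hr; apply: norm_le_coord; first exact: ltW.
    move=> j; rewrite !mxE; have := zr j (ltn_ord j); rewrite coE.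
    move=> /andP[h1 h2]; rewrite ler_norml; apply/andP; split; lra.
  have [n _ Hn] := cov _ Azr.
  exists n; split => // i id.
  have := Hn (Ordinal id); rewrite !mxE -!coE /=.
  done.
- rewrite le_eqVlt; apply/orP; left; apply/eqP; apply: eq_eseriesr => n _ /=.
  by rewrite /volm /box_vol big_mkord; congr (_%:E); apply: eq_bigr => i _; rewrite !coE.
Qed.

Local Close Scope ereal_scope.



Lemma dotvC {R : realType} {d} (u v : 'rV[R]_d) : dotv u v = dotv v u.
Proof. by apply: eq_bigr => i _; rewrite mulrC. Qed.

Lemma dotvDl {R : realType} {d} (u v w : 'rV[R]_d) : dotv (u + v) w = dotv u w + dotv v w.
Proof. by rewrite /dotv -big_split; apply: eq_bigr => i _; rewrite mxE mulrDl. Qed.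

Lemma dotvZl {R : realType} {d} k (u w : 'rV[R]_d) : dotv (k *: u) w = k * dotv u w.
Proof. by rewrite /dotv mulr_sumr; apply: eq_bigr => i _; rewrite mxE mulrA. Qed.

Lemma dotvNl {R : realType} {d} (u w : 'rV[R]_d) : dotv (- u) w = - dotv u w.
Proof. by rewrite -scaleN1r dotvZl mulN1r. Qed.

Lemma dotvBl {R : realType} {d} (u v w : 'rV[R]_d) : dotv (u - v) w = dotv u w - dotv v w.
Proof. by rewrite dotvDl dotvNl. Qed.

Lemma dotvDr {R : realType} {d} (u v w : 'rV[R]_d) : dotv w (u + v) = dotv w u + dotv w v.
Proof. by rewrite dotvC dotvDl !(dotvC w). Qed.

Lemma dotvZr {R : realType} {d} k (u w : 'rV[R]_d) : dotv w (k *: u) = k * dotv w u.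
Proof. by rewrite dotvC dotvZl dotvC. Qed.

Lemma dotvNr {R : realType} {d} (u w : 'rV[R]_d) : dotv w (- u) = - dotv w u.
Proof. by rewrite dotvC dotvNl dotvC. Qed.

Lemma dotvBr {R : realType} {d} (u v w : 'rV[R]_d) : dotv w (u - v) = dotv w u - dotv w v.
Proof. by rewrite dotvDr dotvNr. Qed.

Lemma dotv0l {R : realType} {d} (w : 'rV[R]_d) : dotv 0 w = 0.
Proof. by rewrite /dotv big1 // => i _; rewrite mxE mul0r. Qed.

Lemma dotv0r {R : realType} {d} (w : 'rV[R]_d) : dotv w 0 = 0.
Proof. by rewrite dotvC dotv0l. Qed.

Lemma dotv_ge0 {R : realType} {d} (u : 'rV[R]_d) : 0 <= dotv u u.
Proof. by apply: sumr_ge0 => i _; rewrite -expr2 sqr_ge0. Qed.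

Lemma dotv_eq0 {R : realType} {d} (u : 'rV[R]_d) : dotv u u = 0 -> u = 0.
Proof.
move=> /eqP; rewrite psumr_eq0 => [/allP H|i _]; last by rewrite -expr2 sqr_ge0.
apply/rowP => i; rewrite mxE; apply/eqP.
by have := H i (mem_index_enum i); rewrite /= mulf_eq0 orbb.
Qed.

Lemma dotv_bound {R : realType} {d} (u v : 'rV[R]_d) :
  `|dotv u v| <= d%:R * (`|u| * `|v|).
Proof.
rewrite /dotv; apply: (le_trans (ler_norm_sum _ _ _)).
apply: (@le_trans _ _ (\sum_(i < d) (`|u| * `|v|))).
  apply: ler_sum => i _; rewrite normrM.
  by apply: ler_pM => //; apply: coord_le_norm.
by rewrite sumr_const card_ord mulr_natl.
Qed.

Lemma cont_bound {R : realType} {d} (f : 'rV[R]_d -> R) :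
  (forall x, exists C, 0 <= C /\ forall y, `|x - y| <= 1 -> `|f x - f y| <= C * `|x - y|) ->
  continuous f.
Proof.
move=> H x; have [C [C0 HC]] := H x.
apply/(@cvgrPdist_lt _ _ _ _ (nbhs_filter x)) => e e0.
apply/nbhs_ballP; exists (Num.min 1 (e / (C + 1))) => [|y]/=.
  by rewrite lt_min ltr01 divr_gt0 // ltr_wpDl.
rewrite -ball_normE /= lt_min => /andP[h1 h2].
apply: (le_lt_trans (HC y (ltW h1))).
have C1 : 0 < C + 1 by rewrite ltr_wpDl.
apply: (@le_lt_trans _ _ (C * (e / (C + 1)))).
  by apply: ler_wpM2l => //; exact: ltW.
rewrite mulrA ltr_pdivrMr //; nra.
Qed.

Lemma cont_sqdist {R : realType} {d} (q : 'rV[R]_d) :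
  continuous (fun z : 'rV[R]_d => dotv (z - q) (z - q)).
Proof.
apply: cont_bound => x /=; exists (d%:R * (2 * `|x - q| + 1)); split.
  by apply: mulr_ge0 => //; apply: addr_ge0 => //; apply: mulr_ge0.
move=> y hy.
have -> : dotv (x - q) (x - q) - dotv (y - q) (y - q) =
   dotv (x - y) (x - q) + dotv (y - q) (x - y).
  rewrite !dotvBl !dotvBr; ring.
apply: (le_trans (ler_normD _ _)).
apply: (le_trans (lerD (dotv_bound _ _) (dotv_bound _ _))).
have hv : `|y - q| <= `|x - q| + 1.
  have -> : y - q = (x - q) - (x - y) by rewrite opprB addrCA addrAC subrr add0r.
  apply: (le_trans (ler_normB _ _)); exact: lerD.
have n0 := normr_ge0 (x - y).
have n1 := normr_ge0 (x - q).
have n2 := normr_ge0 (y - q).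
have d0 : 0 <= d%:R :> R by [].
have -> : d%:R * (`|x - y| * `|x - q|) + d%:R * (`|y - q| * `|x - y|) =
   (d%:R * `|x - y|) * (`|x - q| + `|y - q|) by ring.
have -> : d%:R * (2 * `|x - q| + 1) * `|x - y| = (d%:R * `|x - y|) * (2 * `|x - q| + 1) by ring.
apply: ler_wpM2l; first exact: mulr_ge0.
lra.
Qed.

Lemma dotv_gt0 {R : realType} {d} (u : 'rV[R]_d) : u != 0 -> 0 < dotv u u.
Proof.
move=> u0; rewrite lt_def dotv_ge0 andbT; apply/eqP => /dotv_eq0 h.
by rewrite h eqxx in u0.
Qed.

Lemma conv_comb_eq {R : realType} {d} (l : R) (z z0 q : 'rV[R]_d) :
  l *: z + (1 - l) *: z0 - q = (z0 - q) + l *: (z - z0).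
Proof.
by apply/rowP => i; rewrite !mxE; ring.
Qed.

Lemma dotv_expand {R : realType} {d} (u w : 'rV[R]_d) l :
  dotv (u + l *: w) (u + l *: w) = dotv u u + 2 * l * dotv u w + l ^+ 2 * dotv w w.
Proof. rewrite dotvDl !dotvDr !dotvZl !dotvZr (dotvC w u); ring. Qed.

Lemma nearest {R : realType} {d} (D : set 'rV[R]_d) (q : 'rV[R]_d) :
  compact D -> Defs.convex_set D -> D !=set0 -> ~ D q ->
  exists eta, forall z, D z -> dotv (z - q) eta < 0.
Proof.
move=> cD convD D0 Dq.
have [z0 Dz0 zmin] := EVT_min_rV D0 cD (continuous_subspaceT (cont_sqdist q)).
rewrite inE in Dz0.
have zmin' : forall t, D t -> dotv (z0 - q) (z0 - q) <= dotv (t - q) (t - q).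
  by move=> t Dt; apply: zmin; rewrite inE.
exists (q - z0) => z Dz.
have nz : z0 - q != 0 by apply/eqP => /eqP; rewrite subr_eq0 => /eqP h; apply: Dq; rewrite -h.
have pos := @dotv_gt0 _ _ _ nz.
have a0 : 0 <= dotv (z0 - q) (z - z0).
  rewrite leNgt; apply/negP => a0.
  set a := dotv (z0 - q) (z - z0) in a0.
  set b := dotv (z - z0) (z - z0).
  have b0 : 0 <= b := dotv_ge0 _.
  pose l := Num.min 1 (- a / (b + 1)).
  have l0 : 0 < l by rewrite lt_min ltr01 divr_gt0 // ?oppr_gt0 // ltr_wpDl.
  have l1 : l <= 1 by rewrite ge_min lexx.
  have la : l <= - a / (b + 1) by rewrite ge_min lexx orbT.
  have := zmin' _ (convD _ _ Dz Dz0 l (ltW l0) l1).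
  rewrite conv_comb_eq dotv_expand -/a -/b.
  move=> H.
  have H2 : 0 <= 2 * a + l * b by nra.
  have : l * b <= - a.
    apply: (le_trans (ler_wpM2r b0 la)).
    rewrite mulrAC ler_pdivrMr ?ltr_wpDl //; nra.
  lra.
have e1 : z - q = (z - z0) + (z0 - q) by apply/rowP => i; rewrite !mxE; ring.
have e2 : q - z0 = - (z0 - q) by rewrite opprB.
rewrite e1 e2 dotvDl !dotvNr (dotvC (z - z0)).
lra.
Qed.

Lemma sphere_compact {R : realType} {d} : compact [set eta : 'rV[R]_d | `|eta| = 1].
Proof.
have cC := @rV_compact R d (fun _ => `[-1, 1]%classic) (fun _ => @segment_compact R _ _).
apply: (subclosed_compact _ cC).
  apply: (@preimage_closed _ _ (fun eta : 'rV[R]_d => `|eta|) [set x | x = 1]).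
    by move=> x _; apply: norm_continuous.
  exact: closed_eq.
move=> eta /= e1 i; rewrite in_itv /= -ler_norml -e1.
exact: coord_le_norm.
Qed.

Lemma dotv_lipr {R : realType} {d} (v e1 e2 : 'rV[R]_d) :
  `|dotv v e1 - dotv v e2| <= d%:R * (`|v| * `|e1 - e2|).
Proof. by rewrite -dotvBr; apply: dotv_bound. Qed.

Lemma support {R : realType} {d} (D : set 'rV[R]_d) (p : 'rV[R]_d) :
  compact D -> Defs.convex_set D -> D p ->
  (forall rho, 0 < rho -> exists q, `|p - q| < rho /\ ~ D q) ->
  exists eta, eta != 0 /\ forall z, D z -> dotv (z - p) eta <= 0.
Proof.
move=> cD convD Dp bd.
apply: contrapT => H.
have Hpos : forall eta, `|eta| = 1 -> exists z, D z /\ 0 < dotv (z - p) eta.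
  move=> eta e1; apply: contrapT => H2; apply: H; exists eta; split.
    by apply/eqP => e0; move: e1; rewrite e0 normr0 => /eqP; rewrite eq_sym oner_eq0.
  move=> z Dz; rewrite leNgt; apply/negP => h; apply: H2; exists z; done.
pose S := [set eta : 'rV[R]_d | `|eta| = 1].
have := (proj1 (compact_near_coveringP S) sphere_compact nat \oo
   (fun n eta => exists z, D z /\ 1 / n.+1%:R < dotv (z - p) eta) _).
case=> [eta Seta|N _ HN].
  have [z [Dz za]] := Hpos eta Seta.
  set a := dotv (z - p) eta in za.
  pose M := d%:R * `|z - p| + 1.
  have M0 : 0 < M by rewrite ltr_wpDl // mulr_ge0.
  exists ((ball eta (a / 2 / M) : set 'rV[R]_d), (fun n : nat => is_true (2 / a < (n.+1)%:R :> R))); first split => /=.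
  - by apply: (@nbhsx_ballx _ _ eta (a / 2 / M)); rewrite !divr_gt0.
  - exists (Num.truncn (2 / a)) => // n /= hn; rewrite -truncn_le_nat.
    by apply: leq_trans hn.
  move=> [eta' n] [/= b1 b2]; exists z; split => //.
  move: b1; rewrite -ball_normE /= => b1.
  have h1 : 1 / n.+1%:R < a / 2.
    rewrite ltr_pdivrMr // mulrC -ltr_pdivrMr //; last by rewrite divr_gt0.
    by rewrite invf_div mul1r.
  apply: (lt_le_trans h1).
  have h2 := dotv_lipr (z - p) eta eta'.
  have h3 : d%:R * (`|z - p| * `|eta - eta'|) <= a / 2.
    apply: (@le_trans _ _ (M * `|eta - eta'|)).
      by rewrite mulrA; apply: ler_wpM2r => //; rewrite lerDl.
    by rewrite mulrC -ler_pdivlMr // ltW.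
  rewrite -/a in h2; move: h2; rewrite ler_norml => /andP[h4 h5].
  lra.
have {}HN := HN N (leqnn N).
pose r0 : R := 1 / N.+1%:R.
have r00 : 0 < r0 by rewrite divr_gt0.
pose r := r0 / (d%:R + 1).
have r_0 : 0 < r by rewrite divr_gt0 // ltr_wpDl.
have [q [pq Dq]] := bd r r_0.
have [eta0 Heta0] := @nearest _ _ D q cD convD (ex_intro _ p Dp) Dq.
have e00 : eta0 != 0.
  apply/eqP => e0; have := Heta0 p Dp; rewrite e0 dotv0r ltxx //.
have ne0 : 0 < `|eta0| by rewrite normr_gt0.
pose eta := `|eta0|^-1 *: eta0.
have Seta : S eta by rewrite /S /= /eta normrZ normrV ?unitfE ?normr_id ?mulVf // gt_eqF.
have [z [Dz hz]] := HN eta Seta.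
have e1 : dotv (z - p) eta = `|eta0|^-1 * dotv (z - q) eta0 + dotv (q - p) eta.
  have -> : z - p = (z - q) + (q - p) by apply/rowP => i; rewrite !mxE; ring.
  by rewrite dotvDl /eta dotvZr.
have e2 : `|eta0|^-1 * dotv (z - q) eta0 < 0.
  by rewrite pmulr_rlt0 ?invr_gt0 // Heta0.
have e3 : dotv (q - p) eta <= d%:R * r.
  apply: (le_trans (ler_norm _)); apply: (le_trans (dotv_bound _ _)).
  rewrite Seta mulr1 distrC; apply: ler_wpM2l => //; exact: ltW.
have e4 : d%:R * r < r0.
  rewrite /r mulrA ltr_pdivrMr ?ltr_wpDl //; nra.
have hz' : r0 < dotv (z - p) eta := hz.
lra.
Qed.

Definition diffset {R : realType} {d} (K : set 'rV[R]_d) : set 'rV[R]_d :=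
  (fun pr : 'rV[R]_d * 'rV[R]_d => pr.1 - pr.2) @` (K `*` K).

Lemma diffset_compact {R : realType} {d} (K : set 'rV[R]_d) :
  compact K -> compact (diffset K).
Proof.
move=> cK; apply: continuous_compact; last exact: compact_setX.
apply: continuous_subspaceT; exact: sub_continuous.
Qed.

Lemma diffset_convex {R : realType} {d} (K : set 'rV[R]_d) :
  Defs.convex_set K -> Defs.convex_set (diffset K).
Proof.
move=> cK _ _ [[a b] [/= Ka Kb] <-] [[a' b'] [/= Ka' Kb'] <-] l l0 l1.
exists (l *: a + (1 - l) *: a', l *: b + (1 - l) *: b'); first by split; apply: cK.
by apply/rowP => i; rewrite !mxE; ring.
Qed.

Lemma ball_conv {R : realType} {d} (K : set 'rV[R]_d) (c a : 'rV[R]_d) (r eps : R) :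
  Defs.convex_set K -> 0 < r -> (forall v : 'rV[R]_d, `|c - v| < r -> K v) -> K a -> 0 < eps ->
  forall v : 'rV[R]_d, `|(1 + eps)^-1 *: (a + eps *: c) - v| < eps * r / (1 + eps) -> K v.
Proof.
move=> cK r0 Hc Ka e0 v hv.
have e1 : 0 < 1 + eps by rewrite ltr_wpDl.
have e0' : eps != 0 by rewrite gt_eqF.
have e1' : 1 + eps != 0 by rewrite gt_eqF.
pose u := eps^-1 *: ((1 + eps) *: v - a).
have vE : v = (1 + eps)^-1 *: a + (1 - (1 + eps)^-1) *: u.
  apply/rowP => i; rewrite !mxE; field; by rewrite e0' e1'.
have cu : c - u = (eps^-1 * (1 + eps)) *: ((1 + eps)^-1 *: (a + eps *: c) - v).
  apply/rowP => i; rewrite !mxE; field; by rewrite e0' e1'.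
have Ku : K u.
  apply: Hc; rewrite cu normrZ ger0_norm; last by rewrite mulr_ge0 // ?invr_ge0 ltW.
  rewrite -ltr_pdivlMl ?mulr_gt0 ?invr_gt0 //.
  have -> : (eps^-1 * (1 + eps))^-1 * r = eps * r / (1 + eps).
    by field; rewrite e0' e1'.
  exact: hv.
rewrite vE; apply: cK => //.
  by rewrite invr_ge0 ltW.
by rewrite invf_le1 // lerDl ltW.
Qed.

Lemma dichotomy {R : realType} {d} (K : set 'rV[R]_d) (x xi : 'rV[R]_d) (U : set 'rV[R]_d) (k : 'rV[R]_d) :
  convex_body K -> regular_point K x -> unit_vec xi -> ext_normal K x xi ->
  [set x - y | y in support_set K (- xi)] `<=` U -> K k ->
  U (x - k) \/ exists (p : 'rV[R]_d) (rho : R), 0 < rho /\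
    (forall v : 'rV[R]_d, `|p - v| < rho -> K v) /\
    (forall v : 'rV[R]_d, `|(p - (x - k)) - v| < rho -> K v).
Proof.
move=> [cK convK [c Kc]] [Kx _ [xi0 [_ xi0u]]] uxi nxi HU Kk.
move: Kc => /nbhs_ballP [r /= r0 Hr].
have Hc : forall v : 'rV[R]_d, `|c - v| < r -> K v.
  by move=> v hv; apply: Hr; rewrite -ball_normE.
set s := x - k.
have Ds : diffset K s by exists (x, k).
case: (pselect (forall rho, 0 < rho -> exists q, `|s - q| < rho /\ ~ diffset K q)) => [bd|nbd].
  left.
  have [eta [eta0 Heta]] := @support _ _ (diffset K) s (diffset_compact _ cK) (diffset_convex _ convK) Ds bd.
  have hx : forall a, K a -> dotv a eta <= dotv x eta.
    move=> a Ka; have := Heta (a - k) (ex_intro2 _ _ (a, k) (conj Ka Kk) erefl).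
    rewrite /s !dotvBl; lra.
  have hk : forall b, K b -> dotv k eta <= dotv b eta.
    move=> b Kb; have := Heta (x - b) (ex_intro2 _ _ (x, b) (conj Kx Kb) erefl).
    rewrite /s !dotvBl; lra.
  have pos := @dotv_gt0 _ _ _ eta0.
  set n := Num.sqrt (dotv eta eta).
  have n0 : 0 < n by rewrite sqrtr_gt0.
  pose nu := n^-1 *: eta.
  have unu : unit_vec nu.
    rewrite /unit_vec /nu dotvZl dotvZr mulrA -expr2 exprVn sqr_sqrtr; last exact: ltW.
    by rewrite mulVf // gt_eqF.
  have nnu : ext_normal K x nu.
    move=> z Kz; rewrite /nu !dotvZr; apply: ler_wpM2l; [by rewrite invr_ge0 ltW| exact: hx].
  have nuxi : nu = xi by rewrite -(xi0u _ (conj unu nnu)) (xi0u _ (conj uxi nxi)).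
  apply: HU; exists k => //; split => // z Kz.
  rewrite !dotvNr lerN2 -nuxi /nu !dotvZr; apply: ler_wpM2l; [by rewrite invr_ge0 ltW| exact: hk].
right.
have [rho [rho0 Hrho]] : exists rho, 0 < rho /\ forall q, `|s - q| < rho -> diffset K q.
  apply: contrapT => H2; apply: nbd => rho rho0; apply: contrapT => H3; apply: H2.
  exists rho; split => // q hq; apply: contrapT => H4; apply: H3; exists q; split => //.
pose eps := rho / (`|s| + 1).
have s1 : 0 < `|s| + 1 by rewrite ltr_wpDl.
have eps0 : 0 < eps by rewrite divr_gt0.
have e1 : 0 < 1 + eps by rewrite ltr_wpDl // ltW.
pose w := (1 + eps) *: s.
have Dw : diffset K w.
  apply: Hrho.
  have -> : s - w = - (eps *: s) by apply/rowP => i; rewrite !mxE; ring.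
  rewrite normrN normrZ gtr0_norm // /eps mulrAC ltr_pdivrMr //.
  by rewrite ltr_pM2l // ltrDl ltr01.
case: Dw => -[a b] [/= Ka Kb] wE.
exists ((1 + eps)^-1 *: (a + eps *: c)), (eps * r / (1 + eps)).
split; first by rewrite divr_gt0 // mulr_gt0.
split; first exact: (@ball_conv _ _ K c a r eps convK r0 Hc Ka eps0).
have -> : (1 + eps)^-1 *: (a + eps *: c) - (x - k) = (1 + eps)^-1 *: (b + eps *: c).
  have aE : a = b + w by rewrite -wE addrC subrK.
  rewrite aE -/s /w.
  have e1' : 1 + eps != 0 by rewrite gt_eqF.
  by apply/rowP => i; rewrite !mxE; field.
exact: (@ball_conv _ _ K c b r eps convK r0 Hc Kb eps0).
Qed.


Theorem lemma4p3 (R : realType) (d : nat) (K : set 'rV[R]_d)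
  (x xi : 'rV[R]_d) (U : set 'rV[R]_d) :
  convex_body K ->
  regular_point K x ->
  unit_vec xi -> ext_normal K x xi ->
  open U ->
  [set x - y | y in support_set K (- xi)] `<=` U ->
  exists V : set 'rV[R]_d, [/\ open V, V x &
    forall t : 'rV[R]_d, ~ Delta K t ->
      translate K t `&` V !=set0 -> U t].
Proof.
move=> cb reg uxi nxi oU HU.
have [cK convK _] := cb.
pose P (z k' : 'rV[R]_d) := Delta K (z - k') \/ U (z - k').
have cover : forall k, K k -> \forall k' \near k & z \near x, P z k'.
  move=> k Kk.
  case: (@dichotomy _ _ K x xi U k cb reg uxi nxi HU Kk) => [Uk | [p [rho [rho0 [H1 H2]]]]].
    have := oU _ Uk => /nbhs_ballP [del /= del0 Hdel].
    exists ((ball k (del / 2) : set 'rV[R]_d), (ball x (del / 2) : set 'rV[R]_d)).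
      by split; apply: nbhsx_ballx; rewrite divr_gt0.
    move=> [k' z] [/= hk hz]; right; apply: Hdel.
    move: hk hz; rewrite -!ball_normE /= => hk hz.
    have -> : x - k - (z - k') = (x - z) - (k - k') by apply/rowP => i; rewrite !mxE; ring.
    apply: (le_lt_trans (ler_normB _ _)); lra.
  exists ((ball k (rho / 4) : set 'rV[R]_d), (ball x (rho / 4) : set 'rV[R]_d)).
    by split; apply: nbhsx_ballx; rewrite divr_gt0.
  move=> [k' z] [/= hk hz]; left.
  move: hk hz; rewrite -!ball_normE /= => hk hz.
  rewrite /Delta /=.
  apply: (@outer_pos _ _ _ p (rho / 2)); first by rewrite divr_gt0.
  move=> v hv; split; first by apply: H1; lra.
  rewrite /translate /=; apply: H2.
  have -> : p - (x - k) - (v - (z - k')) = (p - v) - ((x - z) - (k - k')).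
    by apply/rowP => i; rewrite !mxE; ring.
  apply: (le_lt_trans (ler_normB _ _)).
  have := ler_normB (x - z) (k - k'); lra.
have := proj1 (compact_near_coveringP K) cK _ (nbhs x) P _ cover.
move=> /(_ (nbhs_filter x)) /nbhs_ballP [del /= del0 Hdel].
exists (ball x del); split.
- exact: ball_open.
- exact: ballxx.
move=> t nD [z [Kzt Vz]].
have := Hdel z Vz (z - t) Kzt.
rewrite /P (_ : z - (z - t) = t); last by rewrite opprB addrC subrK.
by case.
Qed.
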